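(* Let $f\colon X\to Y$ be a morphism in $G\mathbf{BornCoarse}$. Assume that $f$ is a weak coarse equivalence and that there exists an entourage $U$ of $Y$ such that for every $y\in Y$ there is $x\in X$ with $f(x)\in U[\{y\}]$, $G_x\subseteq G_y$ and $|G_y/G_x|<\infty$, where $G_x,G_y$ denote stabilizers. Then $\mathrm{LF}(f)$ is almost surjective.
   Context: $G\mathbf{BornCoarse}$: $G$-sets with $G$-coarse structure (entourages; invariant ones cofinal) and compatible $G$-bornology; morphisms equivariant, controlled, proper. $f$ is a weak coarse equivalence if, after forgetting the $G$-action, there is a controlled proper $g\colon Y\to X$ with $f g$, $g f$ close to the identities (two maps $f_0,f_1$ are close if $(f_0\times f_1)(\mathrm{diag})$ is an entourage). $\mathrm{LF}(X)$ is the set of $G$-invariant subsets $L$ with $|L\cap B|<\infty$ for every bounded $B$. A multivalued map $s\colon L\to H$ is a subset $s\subseteq L\times H$ projecting surjectively onto $L$; it is surjective if it projects surjectively onto $H$; setting $L_h=\{\ell:(\ell,h)\in s\}$, $\tilde L=\bigsqcup_{h\in H}L_h$ with natural maps $q\colon\tilde L\to L$ and $\tilde s\colon \tilde L\to H$, $s$ is proper if $q$ and $\tilde s$ have finite fibres, and equivariant if $s$ is $G$-invariant. $L\in\mathrm{LF}(X)$ is an $f$-shadow of $H\in\mathrm{LF}(Y)$ if there is a proper surjective equivariant multivalued map $s\colon L\to H$ with $(f\times\mathrm{id}_Y)(s)$ an entourage of $Y$. $\mathrm{LF}(f)$ is almost surjective if every $H\in\mathrm{LF}(Y)$ admits an $f$-shadow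 in $\mathrm{LF}(X)$. *)

(* Defs.v *)
From mathcomp Require Import all_boot.
From mathcomp Require Import boolp classical_sets cardinality.
Set Implicit Arguments. Unset Strict Implicit. Unset Printing Implicit Defensive.
Local Open Scope classical_set_scope.

Record group := Group {
  gcar :> Type;
  gmul : gcar -> gcar -> gcar;
  gone : gcar;
  ginv : gcar -> gcar;
  gmulA : forall a b c, gmul a (gmul b c) = gmul (gmul a b) c;
  gmul1g : forall a, gmul gone a = a;
  gmulg1 : forall a, gmul a gone = a;
  gmulVg : forall a, gmul (ginv a) a = gone;
  gmulgV : forall a, gmul a (ginv a) = gone }.

Definition diag (X : Type) : set (X * X) := [set p | p.1 = p.2].
Definition rel_inv (X : Type) (U : set (X * X)) : set (X * X) :=
  [set p | U (p.2, p.1)].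
Definition rel_comp (X : Type) (U V : set (X * X)) : set (X * X) :=
  [set p | exists y, U (p.1, y) /\ V (y, p.2)].
Definition thicken (X : Type) (U : set (X * X)) (A : set X) : set X :=
  [set x | exists2 a, A a & U (x, a)].

Record GBornCoarse (G : group) := MkGBC {
  pt :> Type;
  act : G -> pt -> pt;
  act1 : forall x, act (gone G) x = x;
  actM : forall g h x, act (gmul g h) x = act g (act h x);
  entourage : set (set (pt * pt));
  bounded : set (set pt);
  ent_diag : entourage (@diag pt);
  ent_sub : forall U V, entourage U -> V `<=` U -> entourage V;
  ent_union : forall U V, entourage U -> entourage V -> entourage (U `|` V);
  ent_inv : forall U, entourage U -> entourage (rel_inv U);
  ent_comp : forall U V, entourage U -> entourage V -> entourage (rel_comp U V);
  ent_Ginv_cofinal : forall U, entourage U ->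
     exists2 V, entourage V /\
       (forall g x y, V (x, y) -> V (act g x, act g y)) & U `<=` V;
  bnd_cover : forall x, exists2 B, bounded B & B x;
  bnd_sub : forall A B, bounded B -> A `<=` B -> bounded A;
  bnd_union : forall A B, bounded A -> bounded B -> bounded (A `|` B);
  bnd_Ginv : forall g B, bounded B -> bounded (act g @` B);
  bnd_compat : forall U B, entourage U -> bounded B -> bounded (thicken U B) }.

Arguments act {G} X g x : rename.
Arguments entourage {G} X _ : rename.
Arguments bounded {G} X _ : rename.

Section Morphisms.
Variables (G : group) (X Y : GBornCoarse G).

Definition equivariant (f : X -> Y) := forall g x, f (act X g x) = act Y g (f x).
Definition controlled (f : X -> Y) :=
  forall U, entourage X U -> entourage Y ((fun p => (f p.1, f p.2)) @` U).
Definition proper_map (f : X -> Y) :=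
  forall B, bounded Y B -> bounded X (f @^-1` B).
Definition is_morphism (f : X -> Y) := [/\ equivariant f, controlled f & proper_map f].
End Morphisms.

Definition close (G : group) (Z : Type) (Y : GBornCoarse G) (f0 f1 : Z -> Y) :=
  entourage Y [set (f0 z, f1 z) | z in [set: Z]].

(* Weak coarse equivalence (ignoring the G-action). *)
Definition weak_coarse_equiv (G : group) (X Y : GBornCoarse G) (f : X -> Y) :=
  exists g : Y -> X, [/\ controlled g, proper_map g,
     close (f \o g) id & close (g \o f) id].

Definition G_invariant (G : group) (X : GBornCoarse G) (L : set X) :=
  forall g x, L x -> L (act X g x).
Definition LF (G : group) (X : GBornCoarse G) : set (set X) :=
  [set L | G_invariant L /\ forall B, bounded X B -> finite_set (L `&` B)].
Arguments LF {G} X _.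

(* Multivalued maps s : L -> H, represented as subsets of X * Y. *)
Section Multivalued.
Variables (G : group) (X Y : GBornCoarse G).
Implicit Types (L : set X) (H : set Y) (s : set (X * Y)).

Definition multivalued L H s :=
  s `<=` L `*` H /\ forall l, L l -> exists h, s (l, h).
Definition mv_surjective H s := forall h, H h -> exists l, s (l, h).
(* q : tilde L -> L and tilde s : tilde L -> H have finite fibres *)
Definition mv_proper s :=
  (forall l, finite_set [set h | s (l, h)]) /\
  (forall h, finite_set [set l | s (l, h)]).
Definition mv_equivariant s :=
  forall g l h, s (l, h) -> s (act X g l, act Y g h).

Definition shadow (f : X -> Y) L H :=
  exists s, [/\ multivalued L H s, mv_surjective H s, mv_proper s,
     mv_equivariant s & entourage Y ((fun p => (f p.1, p.2)) @` s)].

Definition LF_almost_surjective (f : X -> Y) :=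
  forall H, LF Y H -> exists2 L, LF X L & shadow f L H.
End Multivalued.

Definition stab (G : group) (X : GBornCoarse G) (x : X) : set G :=
  [set g | act X g x = x].
Arguments stab {G X} x.
Definition finite_index (G : group) (K H : set G) :=
  finite_set [set C : set G | exists2 a, H a & C = [set gmul a k | k in K]].

(* Main.v *)
Require Import Defs.
From mathcomp Require Import all_boot.
From mathcomp Require Import boolp classical_sets cardinality.
From Stdlib Require Import ClassicalEpsilon ProofIrrelevance.
Local Open Scope classical_set_scope.

Section Helpers.
Variables (G : group) (Y : GBornCoarse G).

Lemma actV (g : G) (y : Y) : act Y (ginv g) (act Y g y) = y.
Proof. by rewrite -actM gmulVg act1. Qed.

Lemma actVr (g : G) (y : Y) : act Y g (act Y (ginv g) y) = y.
Proof. by rewrite -actM gmulgV act1. Qed.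

Definition orbit (y : Y) : set Y := fun z => exists g, z = act Y g y.

Lemma orbit_act g y : orbit (act Y g y) = orbit y.
Proof.
apply/seteqP; split => z [h ->].
- by exists (gmul h g); rewrite actM.
- by exists (gmul h (ginv g)); rewrite actM actV.
Qed.

Definition rep (y : Y) : Y := epsilon (inhabits y) (orbit y).

Lemma rep_orb y : orbit y (rep y).
Proof. apply: epsilon_spec; exists y; exists (gone G); by rewrite act1. Qed.

Lemma rep_act g y : rep (act Y g y) = rep y.
Proof.
rewrite /rep orbit_act; congr epsilon; exact: proof_irrelevance.
Qed.

Lemma singleton_bnd (y : Y) : bounded Y [set y].
Proof.
have [B HB By] := bnd_cover y.
by apply: (bnd_sub HB) => z ->.
Qed.

End Helpers.
Arguments orbit {G Y}.
Arguments rep {G Y}.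
Arguments rep_orb {G Y}.
Arguments rep_act {G Y}.
Arguments singleton_bnd {G Y}.
Arguments actV {G Y}.
Arguments actVr {G Y}.

Lemma orbit_fin (G : group) (X Y : GBornCoarse G) (x : X) (y : Y) :
  finite_index (stab x) (stab y) ->
  finite_set [set z | exists k, stab y k /\ z = act X k x].
Proof.
move=> Hfi.
pose phi (C : set G) := act X (epsilon (inhabits (gone G)) C) x.
apply: (sub_finite_set _ (finite_image phi Hfi)).
move=> z [k [ky ->]].
exists [set gmul k k' | k' in stab x]; first by exists k.
rewrite /phi.
set e := epsilon _ _.
have : [set gmul k k' | k' in stab x] e.
  by apply: epsilon_spec; exists (gmul k (gone G)); exists (gone G) => //; exact: act1.
by case=> k'' k''x <-; rewrite actM k''x.
Qed.

Arguments orbit_fin {G X Y x y}.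

Theorem lemma6p11 (G : group) (X Y : GBornCoarse G) (f : X -> Y) :
  is_morphism f ->
  weak_coarse_equiv f ->
  (exists2 U, entourage Y U &
     forall y : Y, exists x : X,
       [/\ thicken U [set y] (f x), stab x `<=` stab y & finite_index (stab x) (stab y)]) ->
  LF_almost_surjective f.
Proof.
move=> [feq fctrl fprop] [g' [g'ctrl g'prop Cfg Cgf]] [U Uent Hx] H [Hinv Hlf].
have [V [Vent Vinv] UV] := ent_Ginv_cofinal Uent.
pose xof (y : Y) : X := proj1_sig (cid (Hx y)).
have xofP y : [/\ thicken U [set y] (f (xof y)), stab (xof y) `<=` stab y
   & finite_index (stab (xof y)) (stab y)] := proj2_sig (cid (Hx y)).
have xofV y : V (f (xof y), y).
  by have [[a -> Ua] _ _] := xofP y; apply: UV.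
pose R (r : Y) := H r /\ rep r = r.
pose s : set (X * Y) := fun p => exists g r, R r /\ p = (act X g (xof r), act Y g r).
pose L : set X := fun l => exists g r, R r /\ l = act X g (xof r).
have sV l h : s (l, h) -> V (f l, h).
  move=> [g [r [_ [-> ->]]]]; rewrite feq; exact: Vinv.
have sH l h : s (l, h) -> H h.
  by move=> [g [r [[Hr _] [_ ->]]]]; apply: Hinv.
have fib_l l : finite_set [set h | s (l, h)].
  apply: (sub_finite_set _ (Hlf _ (bnd_compat (ent_inv Vent) (singleton_bnd (f l))))).
  move=> h slh; split; first exact: sH slh.
  by exists (f l) => //; apply: sV.
have fib_h h : finite_set [set l | s (l, h)].
  have [[l0 sl0]|nex] := pselect (exists l, s (l, h)); last first.
    apply: (sub_finite_set _ (finite_set0 X)) => l slh; apply: nex; by exists l.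
  case: sl0 => g0 [r0 [[Hr0 rr0] [_ hE]]].
  have [_ _ fi] := xofP r0.
  apply: (sub_finite_set _ (finite_image (act X g0) (orbit_fin fi))).
  move=> l [g [r [[Hr rr] [-> hE']]]].
  have rE : r = r0 by rewrite -rr -rr0 -(rep_act g r) -(rep_act g0 r0) -hE -hE'.
  subst r.
  exists (act X (gmul (ginv g0) g) (xof r0)).
    exists (gmul (ginv g0) g); split => //.
    by rewrite /stab /= actM -hE' hE actV.
  by rewrite -actM gmulA gmulgV gmul1g.
exists L.
- split.
    by move=> g l [g1 [r [Rr ->]]]; exists (gmul g g1), r; rewrite actM.
  move=> B HB.
  have W := Cgf.
  have B'b := bnd_compat W HB.
  have B''b := g'prop _ B'b.
  have B3b := bnd_compat (ent_inv Vent) B''b.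
  have F := Hlf _ B3b.
  apply: (sub_finite_set _ (bigcup_finite F (fun h _ => fib_h h))).
  move=> l [[g [r [Rr lE]]] Bl].
  have slh : s (l, act Y g r) by exists g, r; rewrite lE.
  exists (act Y g r) => //; split; first exact: sH slh.
  exists (f l); last exact: sV.
  rewrite /preimage /=; exists l => //.
- exists s; split.
  + split.
      move=> [l h] slh; split; last exact: sH slh.
      by case: slh => g [r [Rr [-> _]]]; exists g, r.
    by move=> l [g [r [Rr ->]]]; exists (act Y g r); exists g, r.
  + move=> h Hh.
    have [k rk] := rep_orb h.
    have Rr : R (rep h).
      split; first by rewrite rk; apply: Hinv.
      by rewrite {1}rk rep_act.
    exists (act X (ginv k) (xof (rep h))), (ginv k), (rep h); split => //.
    by rewrite rk actV.
  + by split.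
  + move=> g l h [g1 [r [Rr [-> ->]]]]; exists (gmul g g1), r.
    by rewrite !actM.
  + apply: (ent_sub Vent) => _ [[l h] slh <-]; exact: sV.
Qed.
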